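(* Let $n\ge1$, let $a_1,\dots,a_n$ be integers, and let $Q$ be a subset of $E=\{(i,j)\mid 1\le i<j\le n\}$. Let $E\overline{Q}$ be the tournament on $\{1,\dots,n\}$ containing $(i,j)$ for each $(i,j)\in E\setminus Q$ and $(j,i)$ for each $(i,j)\in Q$. Put $$A=\prod_{(i,j)\in Q}\frac{x_j}{x_i},\qquad B=\prod_{1\le i<j\le n}\Big(1-\frac{q^{a_j}x_j}{x_i}\Big).$$ Let $1\le r_1<r_2<\cdots<r_s\le n$, $R=\{r_1,\dots,r_s\}$, let $k_1,\dots,k_s$ be integers, and let $E_{\mathbf r,\mathbf k}$ denote the operation on rational functions of replacing $x_{r_i}$ by $x_{r_s}q^{k_s-k_i}$ for $i=1,\dots,s-1$. Then the degree in $x_{r_s}$ of the rational function $E_{\mathbf r,\mathbf k}(A/B)$ is $0$ if and only if $(r,m)\in E\overline{Q}$ for every $r\in R$ and every $m\in\{1,\dots,n\}\setminus R$; otherwise this degree is negative.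
   Context: $q$ is an indeterminate. The degree in $x$ of a rational function of $x$ is the degree in $x$ of its numerator minus the degree in $x$ of its denominator. *)

(* Defs.v *)
From HB Require Import structures.
From mathcomp Require Import all_boot all_order all_algebra.
From mathcomp Require Import fraction.
From mathcomp Require Import mpoly.
Set Implicit Arguments. Unset Strict Implicit. Unset Printing Implicit Defensive.
Import Order.TTheory GRing.Theory Num.Theory.
Local Open Scope ring_scope.

(* Conventions: indices 1..n of the paper are 'I_n = {0,..,n-1}.
   The ambient field is the fraction field of Z[x_0,...,x_{n-1}, q]:
   variable index (widen i) is x_i, variable index ord_max is q. *)

Notation "x %:F" := (@FracField.tofrac _ x) : ring_scope.

Definition ratfun (n : nat) := {fraction {mpoly int[n.+1]}}.

Definition xvar (n : nat) (i : 'I_n) : ratfun n :=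
  ('X_(widen_ord (leqnSn n) i) : {mpoly int[n.+1]})%:F.

Definition qvar (n : nat) : ratfun n := ('X_(@ord_max n) : {mpoly int[n.+1]})%:F.

Definition mdegx (k : nat) (v : 'I_k) (p : {mpoly int[k]}) : nat :=
  \max_(m <- msupp p) m v.

(* "f has degree d in the variable v": f = p/q with p, q nonzero polynomials
   and d = deg_v p - deg_v q (well defined for nonzero f). *)
Definition rdeg_is (n : nat) (v : 'I_n.+1) (f : ratfun n) (d : int) : Prop :=
  exists p q : {mpoly int[n.+1]}, [/\ p != 0, q != 0,
    f = p%:F / q%:F & d = (mdegx v p)%:Z - (mdegx v q)%:Z].

Definition tournament (n : nat) (Q : {set 'I_n * 'I_n}) (u w : 'I_n) : bool :=
  ((u < w)%N && ((u, w) \notin Q)) || ((w < u)%N && ((w, u) \in Q)).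

Definition Afun (n : nat) (Q : {set 'I_n * 'I_n}) (X : 'I_n -> ratfun n) : ratfun n :=
  \prod_(p in Q) (X p.2 / X p.1).

Definition Bfun (n : nat) (a : 'I_n -> int) (X : 'I_n -> ratfun n) : ratfun n :=
  \prod_(i : 'I_n) \prod_(j : 'I_n | (i < j)%N) (1 - qvar n ^ (a j) * X j / X i).

(* E_{r,k}: replace x_{r_i} by x_{r_s} q^{k_s - k_i}; here r, k are indexed by
   'I_s.+1 so that the paper's r_s is r ord_max. *)
Definition Esubst (n s : nat) (r : 'I_s.+1 -> 'I_n) (k : 'I_s.+1 -> int)
  (m : 'I_n) : ratfun n :=
  match [pick i | r i == m] with
  | Some i => xvar (r ord_max) * qvar n ^ (k ord_max - k i)
  | None => xvar m
  end.

(* Main.v *)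
Require Import Defs.
From HB Require Import structures.
From mathcomp Require Import all_boot all_order all_algebra.
From mathcomp Require Import fraction.
From mathcomp Require Import mpoly.
From mathcomp Require Import zify ring.
Set Implicit Arguments. Unset Strict Implicit. Unset Printing Implicit Defensive.
Import Order.TTheory GRing.Theory Num.Theory.
Local Open Scope ring_scope.

Lemma mdegx_ge (k : nat) (v : 'I_k) (p : {mpoly int[k]}) m :
  m \in msupp p -> (m v <= mdegx v p)%N.
Proof. by move=> h; rewrite /mdegx (bigD1_seq m) ?msupp_uniq //= leq_maxl. Qed.

Lemma mdegx_le (k : nat) (v : 'I_k) (p : {mpoly int[k]}) d :
  (forall m, m \in msupp p -> m v <= d)%N -> (mdegx v p <= d)%N.
Proof. by move=> h; rewrite /mdegx; apply/bigmax_leqP_seq => m /h. Qed.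

Lemma seqmax_ex (T : eqType) (s : seq T) (F : T -> nat) : s != [::] ->
  exists2 x, x \in s & F x = (\max_(y <- s) F y)%N.
Proof.
elim: s => // a s IH _; rewrite big_cons.
case: (eqVneq s [::]) => [->|hs].
  by exists a; rewrite ?mem_head // big_nil maxn0.
have [x hx ex] := IH hs.
case: (leqP (F a) (\max_(y <- s) F y)) => h.
  by exists x; rewrite ?inE ?hx ?orbT // (maxn_idPr h).
by exists a; rewrite ?mem_head // (maxn_idPl (ltnW h)).
Qed.

Lemma mdegx_ex (k : nat) (v : 'I_k) (p : {mpoly int[k]}) :
  p != 0 -> exists2 m, m \in msupp p & m v = mdegx v p.
Proof. by rewrite -msupp_eq0 => h; apply: seqmax_ex. Qed.

Definition topx (k : nat) (v : 'I_k) (p : {mpoly int[k]}) (d : nat) : {mpoly int[k]} :=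
  \sum_(m <- msupp p | m v == d) p@_m *: 'X_[m].

Lemma topxE (k : nat) (v : 'I_k) (p : {mpoly int[k]}) d m :
  (topx v p d)@_m = if m v == d then p@_m else 0.
Proof.
rewrite /topx raddf_sum /=.
under eq_bigr do rewrite mcoeffZ mcoeffX.
case: (boolP (m \in msupp p)) => hm.
  rewrite big_mkcond (bigD1_seq m) ?msupp_uniq //= eqxx mulr1 big1 ?addr0 //.
  by move=> x /negbTE hx; rewrite hx mulr0; case: ifP.
rewrite (memN_msupp_eq0 hm) if_same big_seq_cond big1 // => x /andP[hx _].
have -> : (x == m) = false by apply/eqP => e; rewrite -e hx in hm.
by rewrite mulr0.
Qed.

Lemma mdegxM (k : nat) (v : 'I_k) (p q : {mpoly int[k]}) : p != 0 -> q != 0 ->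
  mdegx v (p * q) = (mdegx v p + mdegx v q)%N.
Proof.
have nat1 (x y a b : nat) : (a <= x)%N -> (x + y < a + b)%N -> (y < b)%N by lia.
have nat2 (x y a b : nat) : (x < a)%N -> (x + y = a + b)%N -> (b < y)%N by lia.
have nat4 (x y a b : nat) : (x = a)%N -> (x + y = a + b)%N -> (y == b)%N by lia.
move=> hp hq; set Dp := mdegx v p; set Dq := mdegx v q.
have zp (m : 'X_{1..k}) : (Dp < m v)%N -> p@_m = 0.
  by move=> h; apply: memN_msupp_eq0; apply/negP => /(mdegx_ge v); rewrite leqNgt h.
have zq (m : 'X_{1..k}) : (Dq < m v)%N -> q@_m = 0.
  by move=> h; apply: memN_msupp_eq0; apply/negP => /(mdegx_ge v); rewrite leqNgt h.
have ub (m : 'X_{1..k}) : (Dp + Dq < m v)%N -> (p * q)@_m = 0.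
  move=> hm; rewrite mcoeffM big1 // => kk hk.
  have e : (m v = kk.1 v + kk.2 v)%N by rewrite -mnmDE; exact: (congr1 (fun mm : 'X_{1..k} => mm v) (eqP hk)).
  case: (leqP (kk.1 v) Dp) => h1; last by rewrite zp ?mul0r.
  rewrite zq ?mulr0 //; apply: (nat1 _ _ _ _ h1); by rewrite -e.
set tp := topx v p Dp; set tq := topx v q Dq.
have key (m : 'X_{1..k}) : m v = (Dp + Dq)%N -> (p * q)@_m = (tp * tq)@_m.
  move=> hm; rewrite !mcoeffM; apply: eq_bigr => kk hk.
  have e : (m v = kk.1 v + kk.2 v)%N by rewrite -mnmDE; exact: (congr1 (fun mm : 'X_{1..k} => mm v) (eqP hk)).
  rewrite !topxE.
  case: (ltngtP (kk.1 v) Dp) => h1.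
  - rewrite (zq kk.2) ?mulr0 ?mul0r //; apply: (nat2 _ _ _ _ h1); by rewrite -e -hm.
  - by rewrite zp ?mul0r.
  - by rewrite (nat4 _ _ _ _ h1) // -e -hm.
have hom (m : 'X_{1..k}) : (tp * tq)@_m != 0 -> m v = (Dp + Dq)%N.
  apply: contraNeq => hm; rewrite mcoeffM big1 // => kk hk.
  have e : (m v = kk.1 v + kk.2 v)%N by rewrite -mnmDE; exact: (congr1 (fun mm : 'X_{1..k} => mm v) (eqP hk)).
  rewrite !topxE; case: eqP => h1; last by rewrite mul0r.
  case: eqP => h2; last by rewrite mulr0.
  by move: hm; rewrite e h1 h2 eqxx.
have tp0 : tp != 0.
  have [m0 hm0 e0] := mdegx_ex v hp.
  apply/eqP => h; have := congr1 (mcoeff m0) h.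
  by rewrite topxE e0 eqxx mcoeff0 => h0; move: hm0; rewrite mcoeff_msupp h0 eqxx.
have tq0 : tq != 0.
  have [m0 hm0 e0] := mdegx_ex v hq.
  apply/eqP => h; have := congr1 (mcoeff m0) h.
  by rewrite topxE e0 eqxx mcoeff0 => h0; move: hm0; rewrite mcoeff_msupp h0 eqxx.
have [m1 hm1 _] := mdegx_ex v (mulf_neq0 tp0 tq0).
move: hm1; rewrite mcoeff_msupp => hm1.
have e1 := hom _ hm1.
apply/eqP; rewrite eqn_leq; apply/andP; split.
  apply: mdegx_le => m; rewrite mcoeff_msupp; apply: contraR; rewrite -ltnNge => h.
  by rewrite ub.
by rewrite -e1; apply: mdegx_ge; rewrite mcoeff_msupp key.
Qed.

Lemma mdegxX (k : nat) (v : 'I_k) m : mdegx v ('X_[m] : {mpoly int[k]}) = m v.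
Proof. by rewrite /mdegx msuppX big_seq1. Qed.

Lemma mpolyX_neq0 (k : nat) m : ('X_[m] : {mpoly int[k]}) != 0.
Proof. by apply/eqP => h; have := congr1 (mcoeff m) h; rewrite mcoeffX eqxx mcoeff0. Qed.

Lemma mdegx_binom (k : nat) (v : 'I_k) a b : a != b ->
  mdegx v ('X_[a] - 'X_[b] : {mpoly int[k]}) = maxn (a v) (b v).
Proof.
move=> ab; have ba : b != a by rewrite eq_sym.
apply/eqP; rewrite eqn_leq; apply/andP; split.
  apply: mdegx_le => m /msuppD_le; rewrite mem_cat (perm_mem (msuppN _)) !msuppX !inE.
  by case/orP => /eqP ->; rewrite ?leq_maxl ?leq_maxr.
rewrite geq_max; apply/andP; split; apply: mdegx_ge; rewrite mcoeff_msupp mcoeffB !mcoeffX.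
  by rewrite eqxx (negbTE ba) subr0.
by rewrite eqxx (negbTE ab) sub0r oppr_eq0.
Qed.

Definition LM (n : nat) (v : 'I_n.+1) (f : ratfun n) (d : int) : Prop :=
  exists m1 m2 : 'X_{1..n.+1},
    f = ('X_[m1] : {mpoly int[n.+1]})%:F / ('X_[m2] : {mpoly int[n.+1]})%:F /\
    d = (m1 v)%:Z - (m2 v)%:Z.

Lemma LM1 n (v : 'I_n.+1) : LM v 1 0.
Proof. by exists 0%MM, 0%MM; rewrite mpolyX0 tofrac1 divr1 subrr. Qed.

Lemma LM_mul n (v : 'I_n.+1) f g d1 d2 : LM v f d1 -> LM v g d2 -> LM v (f * g) (d1 + d2).
Proof.
move=> [m1 [m2 [-> ->]]] [m3 [m4 [-> ->]]].
exists (m1 + m3)%MM, (m2 + m4)%MM; rewrite !mpolyXD !tofracM mulf_div !mnmDE; split=> //.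
rewrite !PoszD; ring.
Qed.

Lemma LM_inv n (v : 'I_n.+1) f d : LM v f d -> LM v f^-1 (- d).
Proof.
move=> [m1 [m2 [-> ->]]]; exists m2, m1; rewrite invf_div; split=> //; ring.
Qed.

Lemma LM_prod n (v : 'I_n.+1) (I : finType) (P : pred I) (F : I -> ratfun n) (D : I -> int) :
  (forall i, P i -> LM v (F i) (D i)) -> LM v (\prod_(i | P i) F i) (\sum_(i | P i) D i).
Proof.
move=> h; apply: (big_ind2 (fun f d => LM v f d)) => //; first exact: LM1.
by move=> ? ? ? ? ; apply: LM_mul.
Qed.

Lemma LM_X n (v : 'I_n.+1) (i : 'I_n.+1) :
  LM v (('X_i : {mpoly int[n.+1]})%:F) ((i == v) : nat)%:Z.
Proof. by exists U_(i)%MM, 0%MM; rewrite mpolyX0 tofrac1 divr1 mnm1E mnm0E subr0. Qed.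

Lemma LM_expn n (v : 'I_n.+1) f d (N : nat) : LM v f d -> LM v (f ^+ N) (d * N%:Z).
Proof.
move=> h; elim: N => [|N IH]; first by rewrite expr0 mulr0; apply: LM1.
rewrite exprS; have -> : d * (N.+1)%:Z = d + d * N%:Z by rewrite intS mulrDr mulr1.
exact: LM_mul.
Qed.

Lemma LM_expz n (v : 'I_n.+1) f d (z : int) : LM v f d -> LM v (f ^ z) (d * z).
Proof.
move=> h; case: z => N; first exact: LM_expn.
rewrite NegzE mulrN -exprnN; apply: LM_inv; exact: LM_expn.
Qed.

Definition rdeg_ok n (v : 'I_n.+1) f d := rdeg_is v f d.

Lemma rdeg1 n (v : 'I_n.+1) : rdeg_is v 1 0.
Proof.
exists 1, 1; rewrite oner_neq0 tofrac1 divr1; split=> //.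
by rewrite -mpolyX0 mdegxX mnm0E subrr.
Qed.

Lemma rdeg_mul n (v : 'I_n.+1) f g d1 d2 :
  rdeg_is v f d1 -> rdeg_is v g d2 -> rdeg_is v (f * g) (d1 + d2).
Proof.
move=> [p1 [q1 [hp1 hq1 -> ->]]] [p2 [q2 [hp2 hq2 -> ->]]].
exists (p1 * p2), (q1 * q2); rewrite !mulf_neq0 // !tofracM mulf_div; split=> //.
rewrite !mdegxM // !PoszD; ring.
Qed.

Lemma rdeg_inv n (v : 'I_n.+1) f d : rdeg_is v f d -> rdeg_is v f^-1 (- d).
Proof.
move=> [p [q [hp hq -> ->]]]; exists q, p; rewrite invf_div; split=> //; ring.
Qed.

Lemma rdeg_prod n (v : 'I_n.+1) (I : finType) (P : pred I) (F : I -> ratfun n) (D : I -> int) :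
  (forall i, P i -> rdeg_is v (F i) (D i)) -> rdeg_is v (\prod_(i | P i) F i) (\sum_(i | P i) D i).
Proof.
move=> h; apply: (big_ind2 (fun f d => rdeg_is v f d)) => //; first exact: rdeg1.
by move=> ? ? ? ? ; apply: rdeg_mul.
Qed.

Lemma LM_rdeg n (v : 'I_n.+1) f d : LM v f d -> rdeg_is v f d.
Proof.
move=> [m1 [m2 [-> ->]]]; exists 'X_[m1], 'X_[m2]; rewrite !mpolyX_neq0 !mdegxX; by split.
Qed.

Lemma mpolyX_inj' (k : nat) (a b : 'X_{1..k}) : ('X_[a] : {mpoly int[k]}) = 'X_[b] -> a = b.
Proof.
move=> h; have := congr1 (mcoeff a) h; rewrite !mcoeffX eqxx.
by case: eqP => // _ /eqP; rewrite oner_eq0.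
Qed.

Lemma LM_binom n (v : 'I_n.+1) f d : LM v f d -> 1 - f != 0 ->
  rdeg_is v (1 - f) (Num.max 0 d).
Proof.
move=> [m1 [m2 [ef ->]]] hf.
have X2 : ('X_[m2] : {mpoly int[n.+1]})%:F != 0.
  rewrite tofrac_eq0. exact: mpolyX_neq0.
have ne : m2 != m1.
  apply: contraNneq hf => e. rewrite ef. rewrite -e. rewrite divff //. by rewrite subrr.
exists ('X_[m2] - 'X_[m1]), 'X_[m2]; split.
- rewrite subr_eq0; apply: contra ne => /eqP /mpolyX_inj' ->. by [].
- exact: mpolyX_neq0.
- by rewrite ef tofracB mulrBl divff.
rewrite mdegx_binom // mdegxX.
case: (leqP (m2 v) (m1 v)) => h.
  by apply/max_idPr; rewrite subr_ge0 lez_nat.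
by rewrite subrr; apply/max_idPl; rewrite subr_le0 lez_nat ltnW.
Qed.

Lemma LM_eqd n (v : 'I_n.+1) f d d' : LM v f d -> d = d' -> LM v f d'.
Proof. by move=> h <-. Qed.

Theorem mainTheorem8 (n : nat) (hn : (1 <= n)%N) (a : 'I_n -> int)
  (Q : {set 'I_n * 'I_n}) (hQ : forall p, p \in Q -> (p.1 < p.2)%N)
  (s : nat) (r : 'I_s.+1 -> 'I_n) (hr : forall i j : 'I_s.+1, (i < j)%N -> (r i < r j)%N)
  (k : 'I_s.+1 -> int)
  (hB : Bfun a (Esubst r k) != 0) :
  let R := [set r i | i : 'I_s.+1] in
  let F := Afun Q (Esubst r k) / Bfun a (Esubst r k) in
  exists d : int,
    rdeg_is (widen_ord (leqnSn n) (r ord_max)) F d /\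
    (d = 0 <-> (forall rr m : 'I_n, rr \in R -> m \notin R -> tournament Q rr m)) /\
    (~ (forall rr m : 'I_n, rr \in R -> m \notin R -> tournament Q rr m) -> d < 0).
Proof.
move=> R F.
set v := widen_ord (leqnSn n) (r ord_max).
set X := Esubst r k.
pose e (m : 'I_n) : int := ((m \in R) : nat)%:Z.
have maxv : (ord_max == v) = false.
  apply/eqP => /(congr1 val) /= h; have := ltn_ord (r ord_max); by rewrite -h ltnn.
have widv (m : 'I_n) : (widen_ord (leqnSn n) m == v) = (m == r ord_max).
  by apply/eqP/eqP => [/(congr1 val) /= /val_inj|->].
have hX m : LM v (X m) (e m).
  rewrite /X /Esubst /xvar /qvar; case: pickP => [i /eqP hi | hnone].
  - have hin : m \in R by rewrite -hi; apply: imset_f.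
    have h1 := LM_X v (widen_ord (leqnSn n) (r ord_max)).
    have h2 := LM_expz (k ord_max - k i) (LM_X v ord_max).
    have h3 := LM_mul h1 h2.
    refine (LM_eqd h3 _).
    by rewrite /e hin eqxx maxv mul0r addr0.
  - have hin : m \notin R.
      by apply/imsetP => -[i _ hi]; have := hnone i; rewrite hi eqxx.
    apply: (LM_eqd (LM_X v (widen_ord (leqnSn n) m))).
    rewrite /e (negbTE hin) widv.
    by have := hnone ord_max; rewrite eq_sym => ->.
have hA : LM v (Afun Q X) (\sum_(p in Q) (e p.2 - e p.1)).
  by rewrite /Afun; apply: LM_prod => p _; apply: (LM_mul (hX _) (LM_inv (hX _))).
have hfac (i j : 'I_n) : (i < j)%N -> 1 - qvar n ^ (a j) * X j / X i != 0.
  move=> hij; apply: contraNneq hB => h0.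
  by rewrite /Bfun (bigD1 i) //= (bigD1 j) //= h0 !mul0r.
have hBd : rdeg_is v (Bfun a X)
    (\sum_(i : 'I_n) \sum_(j : 'I_n | (i < j)%N) Num.max 0 (e j - e i)).
  rewrite /Bfun; apply: rdeg_prod => i _; apply: rdeg_prod => j hij.
  apply: LM_binom (hfac i j hij).
  apply: (LM_eqd (LM_mul (LM_mul (LM_expz (a j) (LM_X v ord_max)) (hX j)) (LM_inv (hX i)))).
  by rewrite maxv mul0r add0r.
pose viol (i j : 'I_n) : bool :=
  ((i \in R) && (j \notin R) && ((i, j) \in Q)) ||
  ((i \notin R) && (j \in R) && ((i, j) \notin Q)).
pose c := \sum_(i : 'I_n) \sum_(j : 'I_n | (i < j)%N) ((viol i j : nat)%:Z).
have hd : \sum_(p in Q) (e p.2 - e p.1) - \sum_(i : 'I_n) \sum_(j : 'I_n | (i < j)%N) Num.max 0 (e j - e i)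
          = - c.
  have -> : \sum_(p in Q) (e p.2 - e p.1) =
      \sum_(i : 'I_n) \sum_(j : 'I_n | (i < j)%N) (if (i, j) \in Q then e j - e i else 0).
    transitivity (\sum_(i : 'I_n) \sum_(j : 'I_n) (if (i, j) \in Q then e j - e i else 0)).
      by rewrite pair_big /= big_mkcond; apply: eq_bigr => -[i j] _.
    apply: eq_bigr => i _; rewrite [RHS]big_mkcond; apply: eq_bigr => j _.
    case: ifP => // hq; case: ifP => // hij.
    by have := hQ _ hq; rewrite /= hij.
  rewrite -sumrB /c -sumrN; apply: eq_bigr => i _.
  rewrite -sumrB -sumrN; apply: eq_bigr => j _.
  rewrite /e /viol.
  by case: (i \in R); case: (j \in R); case: ((i, j) \in Q).
exists (\sum_(p in Q) (e p.2 - e p.1) - \sum_(i : 'I_n) \sum_(j : 'I_n | (i < j)%N) Num.max 0 (e j - e i)).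
split; first by rewrite /F; apply: rdeg_mul (LM_rdeg hA) (rdeg_inv hBd).
rewrite hd.
have c0 : 0 <= c by apply: sumr_ge0 => i _; apply: sumr_ge0 => j _.
have nn (b : bool) : 0 <= ((b : nat)%:Z) by case: b.
have inner (i : 'I_n) : 0 <= \sum_(j : 'I_n | (i < j)%N) ((viol i j : nat)%:Z).
  by apply: sumr_ge0 => j _; apply: nn.
have cE : c = 0 <-> (forall i j : 'I_n, (i < j)%N -> ~~ viol i j).
  split.
  - move=> h i j hij.
    have hi := psumr_eq0P (fun i _ => inner i) h (i:=i) isT.
    have := psumr_eq0P (fun j _ => nn (viol i j)) hi (i:=j) hij.
    by case: (viol i j).
  - move=> h; rewrite /c big1 // => i _; rewrite big1 // => j hij.
    by rewrite (negbTE (h i j hij)).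
have TE : (forall i j : 'I_n, (i < j)%N -> ~~ viol i j) <->
          (forall rr m : 'I_n, rr \in R -> m \notin R -> tournament Q rr m).
  split.
  - move=> h rr m hrr hm; rewrite /tournament.
    case: (ltngtP rr m) => hlt.
    + have := h rr m hlt; rewrite /viol hrr hm /= orbF => ->.
      by [].
    + have := h m rr hlt; rewrite /viol hrr (negbTE hm) /= => hq.
      by move: hq; case: ((m, rr) \in Q).
    + have e0 : rr = m by apply: val_inj.
      by move: hm; rewrite -e0 hrr.
  - move=> h i j hij; rewrite /viol.
    have hji : (j < i)%N = false by rewrite ltnNge (ltnW hij).
    case hi: (i \in R); case hj: (j \in R) => //=.
    + have := h i j hi (negbT hj); rewrite /tournament hij hji /=.
      by rewrite !orbF.
    + have := h j i hj (negbT hi); rewrite /tournament hij hji /=.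
      by move=> ->.
split.
- rewrite -TE -cE; split; first by move/eqP; rewrite oppr_eq0 => /eqP.
  by move=> ->; rewrite oppr0.
- move=> hT; rewrite oppr_lt0 lt_def c0 andbT; apply/eqP => h0.
  by apply: hT; apply/TE/cE.
Qed.
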